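(* Let $\mu$ be the Möbius function of the Butcher--Connes--Kreimer Hopf algebra of rooted forests (the convolution inverse of $\zeta\equiv 1$ in its dual algebra). Then for every finite rooted forest $F$, \[ \mu(F)=\begin{cases}(-1)^n & \text{if $F$ consists of $n$ isolated root nodes (i.e. $n$ one-node trees)},\\ 0&\text{otherwise.}\end{cases} \]
   Context: Rooted forests are finite (possibly empty) disjoint unions of finite rooted trees (trees given by their nodes, each non-root node having a parent). The Butcher--Connes--Kreimer Hopf algebra is spanned by isomorphism classes of rooted forests with comultiplication $\Delta(F)=\sum_c P^c(F)\otimes R^c(F)$ over admissible cuts, where $P^c(F)$ is the pruned part and $R^c(F)$ the trunk; equivalently, the sum runs over subsets $U$ of nodes of $F$ closed under taking children, with $P^c(F)=U$ and $R^c(F)=F\setminus U$ carrying the induced forest structures. The dual algebra consists of functions $\varphi$ on isomorphism classes of rooted forests with convolution $(\varphi*\psi)(F)=\sum_{U}\varphi(U)\psi(F\setminus U)$ and unit $\delta(F)=1$ iff $F$ is empty. The zeta function is $\zeta\equiv1$ and the Möbius function is its convolution inverse. *)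

(* Defs.v *)
From HB Require Import structures.
From mathcomp Require Import all_boot all_order all_algebra.
From mathcomp Require Import finmap.
Set Implicit Arguments. Unset Strict Implicit. Unset Printing Implicit Defensive.
Import Order.TTheory GRing.Theory Num.Theory.
Local Open Scope fset_scope.
Local Open Scope ring_scope.

(* A (concrete) rooted forest: a finite set of nodes labelled by naturals and
   a parent function ([None] = the node is a root).  Only the values of [par]
   on [nodes] matter (see [wf_forest] and [forest_iso]). *)
Record forest := Forest { nodes : {fset nat}; par : nat -> option nat }.

Definition anc (F : forest) (k : nat) (x : nat) : option nat :=
  iter k (fun o => obind (par F) o) (Some x).

(* well-formedness: parents of nodes are nodes, and there are no cycles
   (every chain of parents ends at a root). *)
Definition wf_forest (F : forest) : Prop :=
  (forall x p, x \in nodes F -> par F x = Some p -> p \in nodes F) /\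
  (forall x, x \in nodes F -> exists k, anc F k x = None).

Definition forest_iso (F G : forest) : Prop :=
  exists f : nat -> nat,
    {in nodes F &, injective f} /\
    (forall y, y \in nodes G <-> exists2 x, x \in nodes F & f x = y) /\
    (forall x, x \in nodes F -> par G (f x) = omap f (par F x)).

Definition iso_invariant (phi : forest -> int) : Prop :=
  forall F G, wf_forest F -> wf_forest G -> forest_iso F G -> phi F = phi G.

Definition closed_children (F : forest) (U : {fset nat}) : bool :=
  all (fun x => (if par F x is Some p then p \in U else false) ==> (x \in U))
      (nodes F).

Definition restrict (F : forest) (U : {fset nat}) : forest :=
  Forest U (fun x => if x \in U then
                       (if par F x is Some p then (if p \in U then Some p else None)
                        else None)
                     else None).

(* convolution in the dual of the Butcher--Connes--Kreimer Hopf algebra: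
   (phi * psi)(F) = sum over children-closed U of phi(U) psi(F \ U) *)
Definition conv (phi psi : forest -> int) (F : forest) : int :=
  \sum_(U <- fpowerset (nodes F) | closed_children F U)
     phi (restrict F U) * psi (restrict F (nodes F `\` U)).

Definition zeta (F : forest) : int := 1.
Definition delta (F : forest) : int := (nodes F == fset0)%:R.

Definition is_moebius (mu : forest -> int) : Prop :=
  iso_invariant mu /\
  (forall F, wf_forest F -> conv mu zeta F = delta F /\ conv zeta mu F = delta F).

Definition all_isolated_roots (F : forest) : bool :=
  all (fun x => par F x == None) (nodes F).

(* Main.v *)
Require Import Defs.
From mathcomp Require Import all_boot all_order all_algebra.
From mathcomp Require Import finmap.
Import Order.TTheory GRing.Theory Num.Theory.
Local Open Scope fset_scope.
Local Open Scope ring_scope.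
Set Implicit Arguments. Unset Strict Implicit.

Definition mu0 (F : forest) : int :=
  if all_isolated_roots F then (-1) ^+ #|` nodes F| else 0.

Lemma ancS F k x : anc F k.+1 x = obind (par F) (anc F k x).
Proof. by []. Qed.

Lemma ancSr F k x : anc F k.+1 x = iter k (fun o => obind (par F) o) (par F x).
Proof. by rewrite /anc iterSr. Qed.

Lemma iter_none F k : iter k (fun o => obind (par F) o) None = None.
Proof. by elim: k => //= k ->. Qed.

Lemma restrict_wf F U : wf_forest F -> U `<=` nodes F -> wf_forest (restrict F U).
Proof.
move=> [_ Hanc] sUS; split.
  move=> x p /= xU; rewrite xU; case: (par F x) => [q|] //.
  by case: ifP => // qU [<-].
move=> x /= xU; have [k Hk] := Hanc x (fsubsetP sUS x xU); exists k.
suff: anc (restrict F U) k x = None \/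
   (anc (restrict F U) k x = anc F k x /\ forall y, anc F k x = Some y -> y \in U).
  by case=> [//|[-> _]].
elim: k {Hk} => [|k IH]; first by right; split=> // y [<-].
rewrite !ancS; case: IH => [->|[-> Hin]]; first by left.
case E: (anc F k x) => [y|] /=; last by left.
have yU := Hin y E; rewrite yU; case: (par F y) => [p|]; last by left.
by case: ifP => pU; [right; split=> // z [<-] | left].
Qed.

Lemma iso_restrict_self F : wf_forest F -> forest_iso (restrict F (nodes F)) F.
Proof.
move=> [Hpar _]; exists id; split; first by move=> ? ? ? ?.
split.
  by move=> y; split => [yS|[x xS <-]] //; exists y.
move=> x /= xS; rewrite xS; case E: (par F x) => [p|] //=.
by rewrite (Hpar x p xS E).
Qed.

Lemma mu0_iso : iso_invariant mu0.
Proof.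
move=> F G _ _ [f [finj [Hn Hp]]].
have HG : nodes G = [fset f x | x in nodes F].
  apply/fsetP => y; apply/idP/imfsetP.
    by move/Hn => [x xF <-]; exists x.
  by move=> [x xF ->]; apply/Hn; exists x.
rewrite /mu0 /all_isolated_roots HG card_in_imfset //.
have -> : all (fun x => par G x == None) [fset f x | x in nodes F]
        = all (fun x => par F x == None) (nodes F).
  apply/allP/allP => H x xin.
    by have := H (f x) (ltac:(by apply/imfsetP; exists x)); rewrite Hp //; case: (par F x).
  case/imfsetP: xin => y yin ->; rewrite Hp //.
  by move: (H y yin) => /eqP ->.
by [].
Qed.

Lemma sum_toggle (S : {fset nat}) (h : {fset nat} -> int) (a : nat) : a \in S ->
  (forall U, U `<=` S -> h (a |` U) = - h (U `\ a)) ->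
  \sum_(U <- fpowerset S) h U = 0.
Proof.
move=> aS Hh.
rewrite (@big_fsetID _ _ _ _ (fun U : {fset nat} => a \in U)) /=.
set A := [fset x in fpowerset S | a \notin x].
have -> : [fset x in fpowerset S | a \in x] = [fset a |` U | U in A].
  apply/fsetP => W; apply/idP/imfsetP.
    rewrite !inE /= fpowersetE => /andP [WS aW].
    exists (W `\ a); last by rewrite fsetD1K.
    rewrite /A !inE /= fpowersetE eqxx /= andbT.
    exact: fsubset_trans (fsubsetDl _ _) WS.
  case => U; rewrite /A !inE /= fpowersetE => /andP[US aU] ->.
  have H1 : a |` U \in fpowerset S by rewrite fpowersetE fsubUset fsub1set aS US.
  by rewrite fsetU11 andbT; exact: H1.
rewrite big_imfset /=; last first.
  move=> U V; rewrite /A !inE /= => /andP[_ aU] /andP[_ aV] E.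
  by rewrite -(fsetU1K aU) -(fsetU1K aV) E.
have -> : \sum_(U <- enum_finmem (mem A)) h (a |` U) = - \sum_(U <- A) h U.
  rewrite -sumrN; apply: eq_fbigr => U; rewrite /A !inE /= fpowersetE => /andP[US aU] _.
  by rewrite Hh // mem_fsetD1.
by rewrite addNr.
Qed.

Definition haschild (F : forest) (x : nat) : bool :=
  has (fun c => par F c == Some x) (nodes F).

Lemma anc_add F m k y : anc F (m + k) y = iter m (fun o => obind (par F) o) (anc F k y).
Proof. by rewrite /anc iterD. Qed.

Lemma leaf_exists F : wf_forest F -> nodes F != fset0 ->
  exists2 x, x \in nodes F & ~~ haschild F x.
Proof.
move=> [Hpar Hanc] ne.
case E: (has (fun x => ~~ haschild F x) (nodes F)).
  by case/hasP: E => x xS hx; exists x.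
exfalso.
have H : forall x, x \in nodes F -> exists2 c, c \in nodes F & par F c = Some x.
  move=> x xS; have := hasPn (negbT E) x xS; rewrite negbK => /hasP[c cS /eqP pc].
  by exists c.
have C1 : forall k x, x \in nodes F -> exists2 y, y \in nodes F & anc F k y = Some x.
  elim=> [|k IH] x xS; first by exists x.
  have [c cS pc] := H x xS; have [y yS ay] := IH c cS.
  by exists y => //; rewrite ancS ay.
have C2 : forall s : seq nat, {subset s <= nodes F} ->
    exists K, forall y, y \in s -> anc F K y = None.
  elim=> [|y s IH] sub; first by exists 0%N.
  have [K' HK'] := IH (fun z zs => sub z (ltac:(by rewrite inE zs orbT))).
  have [ky Hky] := Hanc y (sub y (mem_head _ _)).
  exists (ky + K')%N => z; rewrite inE => /orP[/eqP ->|zs].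
    by rewrite addnC anc_add Hky iter_none.
  by rewrite anc_add HK' // iter_none.
have [K HK] := C2 (nodes F) (fun z zs => zs).
case: (fset_0Vmem (nodes F)) => [E0|[x xS]]; first by rewrite E0 eqxx in ne.
have [y yS ay] := C1 K x xS.
by rewrite HK in ay.
Qed.

Lemma root_exists F : wf_forest F -> nodes F != fset0 ->
  exists2 r, r \in nodes F & par F r = None.
Proof.
move=> [Hpar Hanc] ne.
case: (fset_0Vmem (nodes F)) => [E0|[x xS]]; first by rewrite E0 eqxx in ne.
have [k Hk] := Hanc x xS.
elim: k x xS Hk => [|k IH] x xS //.
rewrite ancSr; case E: (par F x) => [p|]; last by exists x.
exact: IH (Hpar x p xS E).
Qed.

Notation leaves F := ([fset x in nodes F | ~~ haschild F x]).
Notation nonroots F := ([fset x in nodes F | par F x != None]).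

Lemma left_char F U : U `<=` nodes F ->
  (closed_children F U && all (fun x => par (restrict F U) x == None) U)
  = (U `<=` leaves F).
Proof.
move=> sUS; apply/idP/idP.
  move/andP=> [Hc Ha]; apply/fsubsetP => x xU.
  rewrite !inE /=; apply/andP; split; first exact: (fsubsetP sUS x xU).
  apply/hasPn => c cS; apply/negP => /eqP Pc.
  have := allP Hc c cS; rewrite Pc xU /= => cU.
  by have := allP Ha c cU; rewrite /= cU Pc xU.
move=> sUL.
have leafU : forall x, x \in U -> forall c, c \in nodes F -> par F c != Some x.
  move=> x xU c cS; have := fsubsetP sUL x xU; rewrite inE /= => /andP[_ /hasPn].
  by move/(_ c cS).
apply/andP; split.
  apply/allP => c cS; case E: (par F c) => [p|] //=; apply/implyP => pU.
  by have := leafU p pU c cS; rewrite E eqxx.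
apply/allP => x xU /=; rewrite xU; case E: (par F x) => [p|] //.
case: ifP => // pU.
by have := leafU p pU x (fsubsetP sUS x xU); rewrite E eqxx.
Qed.

Lemma right_char F U : wf_forest F -> U `<=` nodes F ->
  (closed_children F U &&
   all (fun x => par (restrict F (nodes F `\` U)) x == None) (nodes F `\` U))
  = (nonroots F `<=` U).
Proof.
move=> [Hpar _] sUS; apply/idP/idP.
  move/andP=> [Hc Ha]; apply/fsubsetP => x; rewrite inE /= => /andP[xS].
  case E: (par F x) => [p|] // _.
  apply/negPn/negP => xU.
  have xD : x \in nodes F `\` U by rewrite inE xU xS.
  have := allP Ha x xD; rewrite /= xD E.
  have pS := Hpar x p xS E.
  case: ifP => pD //; move: pD; rewrite inE pS andbT => /negbFE pU _.
  by have := allP Hc x xS; rewrite E pU /= (negbTE xU).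
move=> sNU; apply/andP; split.
  apply/allP => x xS; case E: (par F x) => [p|] //=; apply/implyP => _.
  by apply: (fsubsetP sNU); rewrite inE /=; apply/andP; split; [exact: xS | rewrite E].
apply/allP => x xD /=; rewrite xD.
move: xD; rewrite inE => /andP[xU xS].
have : par F x == None.
  apply/negPn/negP => nE.
  have : x \in nonroots F by rewrite inE /=; apply/andP; split.
  by move/(fsubsetP sNU); rewrite (negbTE xU).
by move/eqP ->.
Qed.

Lemma card_toggle (U : {fset nat}) l : #|` l |` U| = (#|` U `\ l|).+1.
Proof.
rewrite cardfsU1 [#|` U|](cardfsD1 l).
by case: (l \in U); rewrite /= ?add0n ?add1n ?addn0 ?add1n.
Qed.

Lemma nodes_empty_sum {F} (g : forest -> forest -> int) :
  nodes F = fset0 ->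
  \sum_(U <- fpowerset (nodes F) | closed_children F U) g (restrict F U) (restrict F (nodes F `\` U))
  = g (restrict F fset0) (restrict F (nodes F `\` fset0)).
Proof.
move=> E; rewrite big_mkcond /= E fpowerset0 big_seq_fset1.
by rewrite /closed_children E.
Qed.

Lemma conv_left F : wf_forest F -> conv mu0 zeta F = delta F.
Proof.
move=> wf; rewrite /conv /delta.
case: (fset_0Vmem (nodes F)) => [E | [a aS]].
  rewrite (nodes_empty_sum (fun A B => mu0 A * zeta B) E) // E eqxx.
  by rewrite /mu0 /zeta /all_isolated_roots /= mulr1.
have ne : nodes F != fset0 by apply/negP => /eqP E; rewrite E in aS.
rewrite (negbTE ne) big_mkcond /=.
have [l lS ll] := leaf_exists wf ne.
have lL : l \in leaves F by rewrite inE /=; apply/andP; split.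
have Hg : forall V, V `<=` nodes F ->
   (if closed_children F V then mu0 (restrict F V) * zeta (restrict F (nodes F `\` V)) else 0)
   = if V `<=` leaves F then (-1) ^+ #|` V| else 0.
  move=> V sV; rewrite -(left_char sV) /mu0 /zeta /all_isolated_roots /= mulr1.
  by case: (closed_children F V); case: (all _ _).
apply: (sum_toggle lS) => U sU.
have s1 : l |` U `<=` nodes F by rewrite fsubUset fsub1set lS sU.
have s2 : U `\ l `<=` nodes F by exact: fsubset_trans (fsubsetDl _ _) sU.
rewrite Hg // Hg //.
have -> : (l |` U `<=` leaves F) = (U `\ l `<=` leaves F).
  rewrite fsubUset fsub1set lL /=.
  apply/fsubsetP/fsubsetP => H x xU.
    by apply: H; move: xU; rewrite inE => /andP[_].
  case: (x =P l) => [->//|/eqP xl]; apply: H; rewrite !inE; apply/andP; split => //.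
by rewrite card_toggle; case: (_ `<=` _); rewrite ?exprS ?mulN1r ?oppr0.
Qed.

Lemma conv_right F : wf_forest F -> conv zeta mu0 F = delta F.
Proof.
move=> wf; rewrite /conv /delta.
case: (fset_0Vmem (nodes F)) => [E | [a aS]].
  rewrite (nodes_empty_sum (fun A B => zeta A * mu0 B) E) E eqxx.
  by rewrite /mu0 /zeta /all_isolated_roots /= mul1r fsetD0.
have ne : nodes F != fset0 by apply/negP => /eqP E; rewrite E in aS.
rewrite (negbTE ne) big_mkcond /=.
have [r rS rr] := root_exists wf ne.
have rN : r \notin nonroots F by apply/negP; rewrite inE /= => /andP[_]; rewrite rr.
have Hg : forall V, V `<=` nodes F ->
   (if closed_children F V then zeta (restrict F V) * mu0 (restrict F (nodes F `\` V)) else 0)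
   = if nonroots F `<=` V then (-1) ^+ #|` nodes F `\` V| else 0.
  move=> V sV; rewrite -(right_char wf sV) /mu0 /zeta /all_isolated_roots /= mul1r.
  by case: (closed_children F V); case: (all _ _).
apply: (sum_toggle rS) => U sU.
have s1 : r |` U `<=` nodes F by rewrite fsubUset fsub1set rS sU.
have s2 : U `\ r `<=` nodes F by exact: fsubset_trans (fsubsetDl _ _) sU.
rewrite Hg // Hg //.
have -> : (nonroots F `<=` r |` U) = (nonroots F `<=` U `\ r).
  apply/fsubsetP/fsubsetP => H x xN.
    have xr : x != r by apply/eqP => E; rewrite -E xN in rN.
    have := H x xN; rewrite !inE => /orP[/eqP E|xU]; first by rewrite E eqxx in xr.
    by apply/andP; split.
  by have := H x xN; rewrite !inE => /andP[_ ->]; rewrite orbT.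
have -> : nodes F `\` (U `\ r) = r |` (nodes F `\` (r |` U)).
  apply/fsetP => x; rewrite !inE.
  by case: (x =P r) => [->|]; rewrite ?rS.
rewrite cardfsU1 !inE eqxx /= add1n.
by case: (_ `<=` _); rewrite ?exprS ?mulN1r ?opprK ?oppr0.
Qed.

Lemma mu_unique mu : is_moebius mu -> forall F, wf_forest F -> mu F = mu0 F.
Proof.
move=> [iso Hmu].
suff H : forall n F, wf_forest F -> (#|` nodes F| < n)%N -> mu F = mu0 F.
  by move=> F wf; exact: (H _ F wf (ltnSn _)).
elim=> [//|n IH] F wf lt.
have wfS := restrict_wf wf (fsubset_refl (nodes F)).
have isoF := iso_restrict_self wf.
rewrite -(iso _ _ wfS wf isoF) -(mu0_iso wfS wf isoF).
have SS : nodes F \in fpowerset (nodes F) by rewrite fpowersetE fsubset_refl.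
have D : forall g : {fset nat} -> int, \sum_(U <- fpowerset (nodes F)) g U
    = g (nodes F) + \sum_(U <- fpowerset (nodes F) `\ nodes F) g U.
  by move=> g; rewrite (big_fsetD1 (nodes F) SS).
have cS : closed_children F (nodes F) by apply/allP => x xS; apply/implyP.
have E : forall U, U \in fpowerset (nodes F) `\ nodes F -> true ->
   (if closed_children F U then mu (restrict F U) * zeta (restrict F (nodes F `\` U)) else 0)
   = (if closed_children F U then mu0 (restrict F U) * zeta (restrict F (nodes F `\` U)) else 0).
  move=> U; rewrite inE => /andP[UneS]; rewrite fpowersetE => sU _.
  case: (closed_children F U) => //; congr (_ * _); apply: IH.
    exact: restrict_wf wf sU.
  rewrite /=; apply: leq_trans (fproper_ltn_card _) lt.
  rewrite fproperEneq sU andbT; apply/eqP => EU; move: UneS; by rewrite EU fset11.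
have e1 := (Hmu F wf).1; have e2 := conv_left wf.
rewrite /conv big_mkcond D cS (eq_fbigr _ E) in e1.
rewrite /conv big_mkcond D cS in e2.
move: e1; rewrite -e2 => /addIr.
by rewrite /zeta !mulr1.
Qed.

Theorem corollary3p6 :
  (exists mu : forest -> int, is_moebius mu) /\
  (forall mu : forest -> int, is_moebius mu ->
     forall F : forest, wf_forest F ->
       mu F = (if all_isolated_roots F then (-1) ^+ #|` nodes F| else 0)).
Proof.
split.
  exists mu0; split; first exact: mu0_iso.
  by move=> F wf; split; [exact: conv_left | exact: conv_right].
by move=> mu Hmu F wf; exact: mu_unique.
Qed.
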